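(* Let $\bar\mu_0\ge0$ and $\lambda_j=L^{k-j}$. For every $f\in\mathcal L^2(\Omega)$ and $x\in\Omega$, $$(G_k(\Omega)f)(x)=\sum_{j=1}^{k-1}\lambda_j^{-2}\big(C'_j(\lambda_j\Omega)f_{\lambda_j}\big)(\lambda_jx)+\lambda_1^{-2}\big(G_1(\lambda_1\Omega)f_{\lambda_1}\big)(\lambda_1x),$$ where $f_\lambda(x')=f(\lambda^{-1}x')$ for $x'\in\lambda\Omega$.
   Context: Setup: $d\ge1$, odd integer $L>1$, integers $k\ge1$, $m\ge k$, $\eta=L^{-k}$, $\Omega=\eta\{0,\dots,L^m-1\}^d$, $\Omega_i=(L^i\eta)\{0,\dots,L^{m-i}-1\}^d$. Fix $a\in(0,1]$, $a_j=a\frac{1-L^{-2}}{1-L^{-2j}}$, $\bar\mu_j=L^{2j}\bar\mu_0$. For $1\le j\le k$ put $\lambda_j=L^{k-j}$ and $\Omega^{(j)}=\lambda_j\Omega=L^{-j}\{0,\dots,L^m-1\}^d$ (lattice spacing $L^{-j}$), with coarse lattices $\Omega^{(j)}_i=\lambda_j\Omega_i$ (so $\Omega^{(j)}_j\subset\mathbb Z^d$). On a lattice set $O$ of spacing $\epsilon$, $\mathcal L^2(O)$ carries the inner product $\epsilon^d\sum_{x\in O}\bar fg$. For $y\in(L^{i}\epsilon)\mathbb Z^d$, $B^\epsilon_i(y)=\{x\in\epsilon\mathbb Z^d: y_\mu\le x_\mu<y_\mu+L^i\epsilon\ \forall\mu\}$. Averaging $Q_{\Omega^{(j)},j}:\mathcal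 L^2(\Omega^{(j)})\to\mathcal L^2(\Omega^{(j)}_j)$, $(Qf)(y)=L^{-jd}\sum_{x\in B^{L^{-j}}_j(y)}f(x)$, with adjoint $(Q^*h)(x)=h(y_x)$; one-step averaging $Q_{\Omega^{(j)}_j}:\mathcal L^2(\Omega^{(j)}_j)\to\mathcal L^2(\Omega^{(j)}_{j+1})$, $(Q\psi)(y)=L^{-d}\sum_{y'\in\Omega^{(j)}_j,\ y_\mu\le y'_\mu<y_\mu+L}\psi(y')$. The Neumann Laplacian on a set $O\subset\epsilon\mathbb Z^d$ is $(\Delta^\epsilon_O f)(x)=\epsilon^{-2}\sum_\mu(f(x+\epsilon e_\mu)-2f(x)+f(x-\epsilon e_\mu))$ with $f(x\pm\epsilon e_\mu):=f(x)$ if $x\pm\epsilon e_\mu\notin O$. Define $G_j(\Omega^{(j)})=(-\Delta^{L^{-j}}_{\Omega^{(j)}}+\bar\mu_j+a_jQ^*_{\Omega^{(j)},j}Q_{\Omega^{(j)},j})^{-1}$ (for $j=k$ this is $G_k(\Omega)=(-\Delta^\eta_\Omega+\bar\mu_k+a_kQ_{\Omega,k}^*Q_{\Omega,k})^{-1}$), $\mathcal H_j=a_jG_j(\Omega^{(j)})Q^*_{\Omega^{(j)},j}$, $C_j(\Omega^{(j)})=\big(a_j-a_j^2Q_{\Omega^{(j)},j}G_j(\Omega^{(j)})Q^*_{\Omega^{(j)},j}+aL^{-2}Q^*_{\Omega^{(j)}_j}Q_{\Omega^{(j)}_j}\big)^{-1}$ on $\mathcal L^2(\Omega^{(j)}_j)$,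 and $C'_j(\Omega^{(j)})=\mathcal H_jC_j(\Omega^{(j)})\mathcal H_j^*$. *)

(* Defs.v *)
From HB Require Import structures.
From mathcomp Require Import all_boot all_order all_algebra.
From mathcomp Require Import reals.
Set Implicit Arguments. Unset Strict Implicit. Unset Printing Implicit Defensive.
Import Order.TTheory GRing.Theory Num.Theory.
Local Open Scope ring_scope.

(* Lattice points.  A lattice set  eps * {0,...,N-1}^d  (spacing eps) is     *)
(* represented by its integer index set  pt d N = {0,...,N-1}^d ; the index  *)
(* n : pt d N stands for the point  eps * n.  Functions on the lattice set   *)
(* are functions  pt d N -> R ; the spacing eps is carried explicitly by the *)
(* operators (Laplacian, adjoints) that depend on it.                        *)
Definition pt (d N : nat) := {ffun 'I_d -> 'I_N}.

Definition mx_of (R : pzRingType) (S T : finType) (F : (T -> R) -> (S -> R))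
  : 'M[R]_(#|{: S}|, #|{: T}|) :=
  \matrix_(i, j) F (fun t => if t == enum_val j then 1 else 0) (enum_val i).

Definition app (R : pzRingType) (S T : finType) (M : 'M[R]_(#|{: S}|, #|{: T}|))
  (f : T -> R) : S -> R :=
  fun s => (M *m \col_j f (enum_val j)) (enum_rank s) ord0.

Definition op_inv (R : comUnitRingType) (T : finType) (F : (T -> R) -> (T -> R))
  : (T -> R) -> (T -> R) := app (invmx (mx_of F)).

(* Hilbert-space adjoint of F : L^2(T, weight wT) -> L^2(S, weight wS),
   where  <f,g>_T = wT * sum_t f t * g t  (wT = eps^d for spacing eps). *)
Definition adjoint (R : fieldType) (S T : finType) (wS wT : R)
  (F : (T -> R) -> (S -> R)) : (S -> R) -> (T -> R) :=
  app ((wS / wT) *: (mx_of F)^T).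

Definition upd (d N : nat) (x : pt d N) (mu : 'I_d) (k : nat) : pt d N :=
  [ffun nu => if nu == mu then insubd (x nu) k else x nu].

Definition neumann_lap (R : fieldType) (d N : nat) (eps : R) (f : pt d N -> R)
  : pt d N -> R :=
  fun x => eps ^- 2 * \sum_(mu < d)
     ((if ((x mu).+1 < N)%N then f (upd x mu (x mu).+1) else f x)
      - 2 * f x
      + (if (0 < x mu)%N then f (upd x mu (x mu).-1) else f x)).

Definition inblock (d N M b : nat) (x : pt d N) (y : pt d M) : bool :=
  [forall mu, ((x mu) %/ b == y mu)%N].

Definition avg (R : fieldType) (d N M b : nat) (f : pt d N -> R) : pt d M -> R :=
  fun y => (b%:R) ^- d * \sum_(x : pt d N | inblock b x y) f x.

(* its adjoint  (Q^* h)(x) = h(y_x)  (the unique y with x in B(y)) *)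
Definition avg_adj (R : fieldType) (d N M b : nat) (h : pt d M -> R) : pt d N -> R :=
  fun x => \sum_(y : pt d M | inblock b x y) h y.

(* Dilation f_lam (x') = f (lam^-1 x'): a function on Omega, viewed on lam*Omega.
   In index coordinates the point lam*(eta*n) of lam*Omega has index n, i.e.
   the same index as eta*n in Omega; hence f_lam has the same index values. *)
Definition dilate (d N : nat) (R : Type) (f : pt d N -> R) : pt d N -> R :=
  fun n => f n.

Unset Implicit Arguments.
Section Ops.
Variables (R : realType) (d L m : nat) (a mu0 : R).

Definition Lr : R := L%:R.
Definition a_ (j : nat) : R := a * (1 - Lr ^- 2) / (1 - Lr ^- (2 * j)).
Definition mu_ (j : nat) : R := Lr ^+ (2 * j) * mu0.

(* Omega^(j) = L^-j {0,..,L^m-1}^d ;  Omega^(j)_j = {0,..,L^(m-j)-1}^d (spacing 1);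
   Omega^(j)_(j+1) = L {0,..,L^(m-j-1)-1}^d (spacing L). *)
Definition fine := pt d (L ^ m).
Definition coarse (j : nat) := pt d (L ^ (m - j)).

Definition Q_ (j : nat) (f : fine -> R) : coarse j -> R := avg (L ^ j) f.
Definition Qs_ (j : nat) (h : coarse j -> R) : fine -> R := avg_adj (L ^ j) h.

Definition Q1_ (j : nat) (h : coarse j -> R) : coarse j.+1 -> R := avg L h.
Definition Q1s_ (j : nat) (h : coarse j.+1 -> R) : coarse j -> R := avg_adj L h.

Definition G_ (j : nat) : (fine -> R) -> (fine -> R) :=
  op_inv (fun f x => - neumann_lap (Lr ^- j) f x + mu_ j * f x
                      + a_ j * Qs_ j (Q_ j f) x).

Definition H_ (j : nat) (h : coarse j -> R) : fine -> R := fun x => a_ j * G_ j (Qs_ j h) x.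

(* H_j^* ; weights: fine spacing L^-j, coarse spacing 1 *)
Definition Hs_ (j : nat) : (fine -> R) -> (coarse j -> R) :=
  adjoint ((Lr ^- j) ^+ d) 1 (H_ j).

Definition C_ (j : nat) : (coarse j -> R) -> (coarse j -> R) :=
  op_inv (fun h y => a_ j * h y - a_ j ^+ 2 * Q_ j (G_ j (Qs_ j h)) y
                      + a * Lr ^- 2 * Q1s_ j (Q1_ j h) y).

Definition Cp_ (j : nat) (f : fine -> R) : fine -> R := H_ j (C_ j (Hs_ j f)).

End Ops.

(* Main.v *)
Require Import Defs.
From HB Require Import structures.
From mathcomp Require Import all_boot all_order all_algebra zify ring lra.
From mathcomp Require Import reals.
From Stdlib Require Import FunctionalExtensionality.
Import Order.TTheory GRing.Theory Num.Theory.
Set Implicit Arguments. Unset Strict Implicit. Unset Printing Implicit Defensive.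
Local Open Scope ring_scope.

Section Glue.
Variable R : fieldType.

Definition dlt (T : finType) (t : T) : T -> R := fun s => if s == t then 1 else 0.

Definition cv (T : finType) (f : T -> R) : 'cV[R]_#|{: T}| := \col_j f (enum_val j).

Lemma sum_dlt (T : finType) (g : T -> R) (x : T) :
  \sum_t g t * dlt t x = g x.
Proof.
rewrite (bigD1 x) //= big1 /dlt ?eqxx ?mulr1 ?addr0 // => t /negbTE.
by rewrite eq_sym => ->; rewrite mulr0.
Qed.

Lemma appE (S T : finType) (M : 'M[R]_(#|{: S}|, #|{: T}|)) f s :
  app M f s = \sum_j M (enum_rank s) j * f (enum_val j).
Proof. by rewrite /app !mxE; apply: eq_bigr => j _; rewrite mxE. Qed.

Lemma cv_app (S T : finType) (M : 'M[R]_(#|{: S}|, #|{: T}|)) f :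
  cv (app M f) = M *m cv f.
Proof. by apply/colP => i; rewrite /cv mxE /app enum_valK. Qed.

Lemma app_congr (S T : finType) (M : 'M[R]_(#|{: S}|, #|{: T}|)) f g s :
  (forall t, f t = g t) -> app M f s = app M g s.
Proof. by move=> fg; rewrite !appE; apply: eq_bigr => j _; rewrite fg. Qed.

Lemma app_mul (S T U : finType) (M : 'M[R]_(#|{: S}|, #|{: T}|))
   (N : 'M[R]_(#|{: T}|, #|{: U}|)) f s :
  app M (app N f) s = app (M *m N) f s.
Proof. by move: (cv_app N f); rewrite /cv /app => ->; rewrite mulmxA. Qed.

Lemma app_add (S T : finType) (M N : 'M[R]_(#|{: S}|, #|{: T}|)) f s :
  app (M + N) f s = app M f s + app N f s.
Proof. by rewrite /app mulmxDl mxE. Qed.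

Lemma app_opp (S T : finType) (M : 'M[R]_(#|{: S}|, #|{: T}|)) f s :
  app (- M) f s = - app M f s.
Proof. by rewrite /app mulNmx mxE. Qed.

Lemma app_scale (S T : finType) c (M : 'M[R]_(#|{: S}|, #|{: T}|)) f s :
  app (c *: M) f s = c * app M f s.
Proof. by rewrite /app -scalemxAl mxE. Qed.

Lemma app_id (T : finType) f (s : T) : app (1%:M : 'M[R]_#|{: T}|) f s = f s.
Proof. by rewrite /app mul1mx mxE enum_rankK. Qed.

Lemma app_fun0 (S T : finType) (M : 'M[R]_(#|{: S}|, #|{: T}|)) s :
  app M (fun _ => 0) s = 0.
Proof. by rewrite appE big1 // => j _; rewrite mulr0. Qed.

Lemma mx_of_app (S T : finType) (M : 'M[R]_(#|{: S}|, #|{: T}|)) :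
  mx_of (app M) = M.
Proof.
apply/matrixP => i j; rewrite mxE appE enum_valK (bigD1 j) //= eqxx mulr1.
rewrite big1 ?addr0 // => l /negbTE lj.
by rewrite (inj_eq enum_val_inj) lj mulr0.
Qed.

Lemma mx_of_ext (S T : finType) (F : (T -> R) -> S -> R) (M : 'M[R]_(#|{: S}|, #|{: T}|)) :
  (forall f s, F f s = app M f s) -> mx_of F = M.
Proof. by move=> H; rewrite -[RHS]mx_of_app; apply/matrixP => i j; rewrite !mxE H. Qed.



Lemma unit_of_ker n (A : 'M[R]_n) :
  (forall v : 'rV_n, v *m A = 0 -> v = 0) -> A \in unitmx.
Proof.
move=> H; rewrite -row_free_unit -kermx_eq0; apply/eqP/row_matrixP => i.
rewrite row0; apply: H; rewrite -row_mul; apply/rowP => j.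
have /eqP -> : kermx A *m A == 0 by rewrite -sub_kermx submx_refl.
by rewrite !mxE.
Qed.

End Glue.
Arguments dlt {R T} t s.
Arguments cv {R T} f.

Lemma app_lin (R : fieldType) (S T : finType) (F : (T -> R) -> S -> R) :
  (forall f s, F f s = \sum_t f t * F (dlt t) s) ->
  forall f s, F f s = app (mx_of F) f s.
Proof.
move=> H f s; rewrite H appE.
rewrite (reindex (@enum_val _ (pred_of_simpl (pred_of_argType T)))) /=.
  by apply: eq_bigr => j _; rewrite mxE enum_rankK mulrC.
by apply: onW_bij; apply: enum_val_bij.
Qed.

Lemma lin_of_sum (R : fieldType) (S T : finType) (F : (T -> R) -> S -> R) :
  (forall (c : T -> R) (g : T -> T -> R) s,
      F (fun x => \sum_t c t * g t x) s = \sum_t c t * F (g t) s) ->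
  forall f s, F f s = \sum_t f t * F (dlt t) s.
Proof.
move=> H f s; rewrite -H; congr (F _ s).
apply: functional_extensionality => x; rewrite -[LHS](sum_dlt f x).
by apply: eq_bigr => t _; rewrite /dlt eq_sym.
Qed.

Lemma app_inj (R : fieldType) (S T : finType) (M N : 'M[R]_(#|{: S}|, #|{: T}|)) :
  (forall f s, app M f s = app N f s) -> M = N.
Proof. by move=> H; rewrite -(mx_of_app M); apply: mx_of_ext. Qed.

Lemma sum_ind (R : fieldType) (T : finType) (P : pred T) (t : T) :
  \sum_(x | P x) (if x == t then 1 else 0 : R) = if P t then 1 else 0.
Proof.
rewrite big_mkcond /= (bigD1 t) //= eqxx big1 ?addr0.
  by case: (P t).
by move=> x /negbTE ->; case: (P x).
Qed.

Section Prim.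
Variable R : fieldType.

Lemma avg_sum (d N M b : nat) (I : finType) (c : I -> R) (g : I -> pt d N -> R) y :
  avg (M:=M) b (fun x => \sum_t c t * g t x) y = \sum_t c t * avg (M:=M) b (g t) y.
Proof.
rewrite /avg exchange_big /= mulr_sumr; apply: eq_bigr => t _.
by rewrite -mulr_sumr mulrCA.
Qed.

Lemma avg_adj_sum (d N M b : nat) (I : finType) (c : I -> R) (g : I -> pt d M -> R) x :
  avg_adj (N:=N) b (fun y => \sum_t c t * g t y) x = \sum_t c t * avg_adj (N:=N) b (g t) x.
Proof. by rewrite /avg_adj exchange_big /=; apply: eq_bigr => t _; rewrite -mulr_sumr. Qed.

Lemma ifsum (I : finType) (b : bool) (c u v : I -> R) :
  (if b then \sum_t c t * u t else \sum_t c t * v t) = \sum_t c t * (if b then u t else v t).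
Proof. by case: b. Qed.

Lemma comb3 (I : finType) (c A B C : I -> R) :
  \sum_t c t * A t - 2 * \sum_t c t * B t + \sum_t c t * C t
  = \sum_t c t * (A t - 2 * B t + C t).
Proof.
rewrite mulr_sumr -sumrB -big_split /=; apply: eq_bigr => t _.
by rewrite mulrCA -mulrBr -mulrDr.
Qed.

Lemma lap_sum (d N : nat) (eps : R) (I : finType) (c : I -> R) (g : I -> pt d N -> R) x :
  neumann_lap eps (fun x => \sum_t c t * g t x) x = \sum_t c t * neumann_lap eps (g t) x.
Proof.
rewrite /neumann_lap.
under eq_bigr => mu _ do rewrite !ifsum comb3.
rewrite exchange_big mulr_sumr /=; apply: eq_bigr => t _.
by rewrite mulrCA -mulr_sumr.
Qed.

End Prim.

Section Lap.
Variables (d N : nat).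
Implicit Types (x y : pt d N) (mu nu : 'I_d).

Lemma upd_val x mu k nu :
  val (upd x mu k nu) = if nu == mu then (if (k < N)%N then k else x nu) else x nu.
Proof. by rewrite /upd ffunE; case: eqP => // _; rewrite val_insubd. Qed.

Definition up mu x := upd x mu (x mu).+1.
Definition dn mu x := upd x mu (x mu).-1.

Lemma up_dn mu x : (0 < x mu)%N -> up mu (dn mu x) = x.
Proof.
move=> Hx; apply/ffunP => nu; apply: val_inj; rewrite /up !upd_val.
have h1 : ((x mu).-1 < N)%N by rewrite (leq_ltn_trans (leq_pred _) (ltn_ord _)).
case: (eqVneq nu mu) => [->|_] //.
by rewrite eqxx h1 prednK // ltn_ord.
Qed.

Lemma dn_up mu y : ((y mu).+1 < N)%N -> dn mu (up mu y) = y.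
Proof.
move=> Hy; apply/ffunP => nu; apply: val_inj; rewrite /dn !upd_val.
case: (eqVneq nu mu) => [->|_] //.
by rewrite eqxx Hy /= ltn_ord.
Qed.

Lemma up_mu mu y : ((y mu).+1 < N)%N -> val (up mu y mu) = (y mu).+1.
Proof. by move=> H; rewrite upd_val eqxx H. Qed.

Lemma up_over mu y : ~~ ((y mu).+1 < N)%N -> up mu y = y.
Proof.
move=> /negbTE H; apply/ffunP => nu; apply: val_inj; rewrite upd_val.
by case: eqP => [->|]; rewrite ?H.
Qed.

Lemma dn_mu mu y : val (dn mu y mu) = (y mu).-1.
Proof. by rewrite upd_val eqxx (leq_ltn_trans (leq_pred _) (ltn_ord _)). Qed.

Variable R : fieldType.

Lemma reind_dn mu (F : pt d N -> R) :
  \sum_(x : pt d N | (0 < x mu)%N) F x = \sum_(y : pt d N | ((y mu).+1 < N)%N) F (up mu y).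
Proof.
rewrite (reindex_onto (up mu) (dn mu)); last by move=> x; apply: up_dn.
apply: eq_bigl => y; case H: ((y mu).+1 < N)%N.
  by rewrite dn_up // eqxx andbT up_mu.
rewrite up_over ?H //; apply/negbTE/negP => /andP [Hp /eqP].
move=> /(congr1 (fun z : pt d N => val (z mu))); rewrite dn_mu.
move=> E; have E2 : (nat_of_ord (y mu)).-1 = nat_of_ord (y mu) := E; move: Hp E2; case: (nat_of_ord (y mu)) => //= n _; lia.
Qed.


Lemma if_split (c1 c2 : bool) (A B C : R) :
  (if c1 then A else B) - 2 * B + (if c2 then C else B)
  = (if c1 then A - B else 0) + (if c2 then C - B else 0).
Proof. by case: c1; case: c2; ring. Qed.

Lemma lap_form (w v : pt d N -> R) :
  \sum_x w x * neumann_lap 1 v x =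
  - \sum_mu \sum_(x : pt d N | ((x mu).+1 < N)%N)
        (w (up mu x) - w x) * (v (up mu x) - v x).
Proof.
rewrite /neumann_lap expr1n invr1.
under eq_bigr => x _ do rewrite mul1r mulr_sumr.
rewrite exchange_big -sumrN; apply: eq_bigr => mu _ /=.
under eq_bigr => x _ do rewrite if_split mulrDr !(fun_if (fun z => w x * z)) !mulr0.
rewrite big_split /= -!big_mkcond /= reind_dn -sumrN -big_split /=.
apply: eq_bigr => x Hx; rewrite -/(dn mu (up mu x)) dn_up // -/(up mu x); ring.
Qed.


Definition zs (s : seq 'I_d) x := foldr (fun mu y => upd y mu 0) x s.

Lemma zs_val s x nu : val (zs s x nu) = if nu \in s then 0%N else x nu.
Proof.
have N0 : (0 < N)%N by apply: leq_ltn_trans (ltn_ord (x nu)).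
elim: s => [|mu s IH] //=; rewrite upd_val in_cons N0 IH.
by case: eqP => [->|].
Qed.

Lemma const_of_edges (f : pt d N -> R) :
  (forall mu x, ((x mu).+1 < N)%N -> f (up mu x) = f x) -> forall x y, f x = f y.
Proof.
move=> E.
have step : forall mu x, f x = f (upd x mu 0).
  move=> mu x; have N0 : (0 < N)%N by apply: leq_ltn_trans (ltn_ord (x mu)).
  move: {2}(nat_of_ord (x mu)) (erefl (nat_of_ord (x mu))) => n.
  elim: n x => [|n IH] x Hx.
    congr f; apply/ffunP => nu; apply: val_inj; rewrite upd_val N0.
    by case: eqP => [->|].
  have Hx' : nat_of_ord (dn mu x mu) = n by rewrite dn_mu Hx.
  rewrite -(up_dn (x := x) (mu := mu)) ?Hx // E; last by rewrite Hx' -Hx ltn_ord.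
  rewrite (IH _ Hx'); congr f; apply/ffunP => nu; apply: val_inj.
  by rewrite !upd_val N0; case: eqP.
have zsE : forall s x, f x = f (zs s x).
  by move=> s x; elim: s => [|mu s IH] //=; rewrite -step.
move=> x y; rewrite (zsE (enum 'I_d) x) (zsE (enum 'I_d) y); congr f.
by apply/ffunP => nu; apply: val_inj; rewrite !zs_val mem_enum.
Qed.

End Lap.

Lemma count_div (N M b c : nat) : (0 < b)%N -> N = (b * M)%N -> (c < M)%N ->
  #|[pred i : 'I_N | (i %/ b == c)%N]| = b.
Proof.
move=> b0 NbM cM.
rewrite -sum1_card -(big_mkord (fun i => (i %/ b == c)%N) (fun _ => 1%N)).
rewrite big_mkcond /=.
have h1 : (c * b <= c * b + b)%N by rewrite leq_addr.
have h2 : (c * b + b <= N)%N by rewrite NbM -mulSnr mulnC leq_mul2l cM orbT.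
rewrite (big_cat_nat (n := (c * b)%N)) //=; last by apply: leq_trans h2.
rewrite (big_cat_nat (n := (c * b + b)%N) h1 h2) /=.
rewrite (@eq_big_nat _ _ _ 0 (c * b) _ (fun _ => 0%N)); last first.
  move=> i /andP [_ Hi]; case: eqP => // E.
  by move: Hi; rewrite -E ltnNge leq_trunc_div.
rewrite (@eq_big_nat _ _ _ (c * b + b) N _ (fun _ => 0%N)); last first.
  move=> i /andP [Hi _]; case: eqP => // E.
  by move: Hi; rewrite -E -mulSnr leqNgt ltn_ceil.
rewrite (@eq_big_nat _ _ _ (c * b) (c * b + b) _ (fun _ => 1%N)); last first.
  move=> i /andP [Hi Hi']; case: eqP => // E; exfalso; apply: E.
  apply/eqP; rewrite eqn_leq -ltnS !(leq_divRL, ltn_divLR) //.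
  by rewrite mulSn addnC Hi Hi'.
rewrite !big_const_nat !iter_addn_0.
by rewrite !mul0n mul1n add0n addn0 addKn.
Qed.

Lemma foldr_const (T : Type) (s : seq T) (b : nat) :
  foldr muln 1%N [seq b | _ <- s] = (b ^ size s)%N.
Proof. by elim: s => //= x s ->; rewrite expnS. Qed.

Section Block.
Variables (d N M b : nat).
Hypothesis b0 : (0 < b)%N.
Hypothesis NbM : N = (b * M)%N.

Lemma blk_lt (i : 'I_N) : (i %/ b < M)%N.
Proof. by rewrite ltn_divLR // mulnC -NbM. Qed.

Definition blk (x : pt d N) : pt d M := [ffun mu => Ordinal (blk_lt (x mu))].

Lemma inblockE (x : pt d N) (y : pt d M) : inblock b x y = (y == blk x).
Proof.
apply/forallP/eqP => [H|-> mu]; last by rewrite ffunE.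
apply/ffunP => nu; apply: val_inj; rewrite ffunE /=.
by apply/esym/eqP; apply: H.
Qed.

Lemma card_block (y : pt d M) : #|[pred x : pt d N | inblock b x y]| = (b ^ d)%N.
Proof.
have -> : #|[pred x : pt d N | inblock b x y]| =
    #|family (fun mu => [pred i : 'I_N | (i %/ b == y mu)%N])|.
  apply: eq_card => x; rewrite [in LHS]inE /inblock.
  by apply/forallP/familyP => H mu; move: (H mu); rewrite inE.
rewrite card_family /image_mem.
rewrite (eq_map (g := fun _ => b)); last by move=> mu; apply: count_div => //; exact: NbM.
etransitivity; first exact: foldr_const.
by rewrite -cardE card_ord.
Qed.

Variable R : numFieldType.

Lemma avg_adjE (h : pt d M -> R) x : avg_adj b h x = h (blk x).
Proof.
rewrite /avg_adj (eq_bigl (fun y => y == blk x)); last by move=> y; rewrite inblockE.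
by rewrite big_pred1_eq.
Qed.

Lemma avg_avg_adj (h : pt d M -> R) y : avg b (avg_adj (N := N) b h) y = h y.
Proof.
rewrite /avg (eq_bigr (fun _ => h y)); last first.
  by move=> x; rewrite avg_adjE inblockE => /eqP <-.
rewrite sumr_const card_block -[h y *+ _]mulr_natr natrX mulrCA mulVf ?mulr1 //.
by rewrite expf_neq0 // pnatr_eq0 -lt0n.
Qed.

Lemma avg_const_on (g : pt d N -> R) (y : pt d M) c :
  (forall x, inblock b x y -> g x = c) -> avg b g y = c.
Proof.
move=> H; rewrite /avg (eq_bigr (fun _ => c)) //.
rewrite sumr_const card_block -[c *+ _]mulr_natr natrX mulrCA mulVf ?mulr1 //.
by rewrite expf_neq0 // pnatr_eq0 -lt0n.
Qed.

Lemma avg_adj_form (f : pt d N -> R) :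
  \sum_x f x * avg_adj b (avg (M := M) b f) x =
  (b%:R ^+ d) * \sum_(y : pt d M) (avg b f y) ^+ 2.
Proof.
rewrite /avg_adj; under eq_bigr => x _ do rewrite mulr_sumr.
rewrite (exchange_big_dep xpredT) //= mulr_sumr; apply: eq_bigr => y _.
rewrite -mulr_suml expr2 mulrA; congr (_ * _).
rewrite /avg mulrA mulrV ?mul1r //.
by rewrite unitfE expf_neq0 // pnatr_eq0 -lt0n.
Qed.

End Block.

Section Comp.
Variables (d N M K b c : nat).
Hypotheses (b0 : (0 < b)%N) (c0 : (0 < c)%N) (NbM : N = (b * M)%N) (McK : M = (c * K)%N).

Lemma inblock_comp (x : pt d N) (z : pt d K) :
  inblock c (blk b0 NbM x) z = inblock (b * c) x z.
Proof.
by apply: eq_forallb => mu; rewrite ffunE /= divnMA.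
Qed.

Variable R : numFieldType.

Lemma avg_comp (f : pt d N -> R) z :
  avg (M := K) c (avg (M := M) b f) z = avg (b * c) f z.
Proof.
rewrite /avg.
under eq_bigr do rewrite mulrC.
rewrite -mulr_suml mulrCA mulrC natrM exprMn invfM [(c%:R ^- d) * _]mulrC; congr (_ * _).
rewrite (exchange_big_dep (fun x => inblock (b * c) x z)) /=; last first.
  move=> y x Hy; rewrite inblockE //; move/eqP => E; by rewrite -inblock_comp -E.
apply: eq_bigr => x Hx.
rewrite (eq_bigl (fun y => y == blk b0 NbM x)); first by rewrite big_pred1_eq.
move=> y; rewrite [inblock b _ _]inblockE //; case: eqP => [->|]; rewrite ?andbF //.
by rewrite inblock_comp Hx.
Qed.

End Comp.

Lemma avg_tr (R : fieldType) (d N M b : nat) :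
  mx_of (avg (R := R) (d := d) (N := N) (M := M) b) =
  (b%:R ^- d) *: (mx_of (avg_adj (R := R) (d := d) (N := N) (M := M) b))^T.
Proof.
apply/matrixP => i l; rewrite !mxE /avg /avg_adj !sum_ind.
by case: (inblock b _ _); rewrite ?mulr1 ?mulr0.
Qed.

Section Wood.
Variable R : fieldType.

Lemma wood_s1 n c (Mj M' : 'M[R]_n) (S : 'M_(n, c)) (Q : 'M_(c, n)) (X : 'M_c) :
  Mj \in unitmx -> M' \in unitmx -> Mj = M' + S *m X *m Q ->
  invmx M' = invmx Mj + invmx Mj *m S *m X *m Q *m invmx M'.
Proof.
move=> uMj uM' E.
have e1 : Mj *m invmx M' = 1%:M + S *m X *m Q *m invmx M' by rewrite E mulmxDl mulmxV.
have e2 : invmx M' = invmx Mj *m (Mj *m invmx M') by rewrite mulmxA mulVmx // mul1mx.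
by rewrite {1}e2 e1 mulmxDr mulmx1 !mulmxA.
Qed.

Lemma woodbury n c (Mj M' : 'M[R]_n) (S : 'M_(n, c)) (Q : 'M_(c, n)) (X : 'M_c) :
  Mj \in unitmx -> M' \in unitmx -> Mj = M' + S *m X *m Q ->
  invmx M' = invmx Mj + invmx Mj *m S *m (X + X *m (Q *m invmx M' *m S) *m X) *m Q *m invmx Mj.
Proof.
move=> uMj uM' E.
set G := invmx Mj; set G' := invmx M'.
have s1 : G' = G + G *m S *m X *m Q *m G'.
  have e1 : Mj *m G' = 1%:M + S *m X *m Q *m G' by rewrite E mulmxDl mulmxV.
  have e2 : G' = G *m (Mj *m G') by rewrite mulmxA mulVmx // mul1mx.
  by rewrite {1}e2 e1 mulmxDr mulmx1 !mulmxA.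
have s2 : G' = G + G' *m S *m X *m Q *m G.
  have e1 : G' *m Mj = 1%:M + G' *m (S *m X *m Q) by rewrite E mulmxDr mulVmx.
  have e2 : G' = (G' *m Mj) *m G by rewrite -mulmxA mulmxV // mulmx1.
  by rewrite {1}e2 e1 mulmxDl mul1mx !mulmxA.
by rewrite {1}s1 {1}s2 !mulmxDr !mulmxDl !mulmxA addrA.
Qed.


Lemma cinv c (X P K K' : 'M[R]_c) (aj b g : R) :
  X = aj *: 1%:M - b *: P -> P *m P = P -> g * aj = b * (aj + g) ->
  K' = K + K *m X *m K' ->
  (aj *: 1%:M - aj ^+ 2 *: K + g *: P) *m (X + X *m K' *m X) = aj ^+ 2 *: 1%:M.
Proof.
move=> hX hP hs hK.
have ZX : (aj *: 1%:M + g *: P) *m X = aj ^+ 2 *: 1%:M.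
  rewrite hX mulmxDl !mulmxBr -!scalemxAl -!scalemxAr !mul1mx !mulmx1 hP !scalerA.
  by rewrite hs -expr2 mulrDr scalerDl [aj * b]mulrC [g * b]mulrC addrK subrK.
have XE : X + X *m K' *m X = X *m (1%:M + K' *m X) by rewrite mulmxDr mulmx1 mulmxA.
rewrite XE mulmxA addrAC mulmxBl ZX -scalemxAl.
rewrite -scalerBr -scalemxAl; congr (_ *: _).
rewrite mulmxBl mul1mx mulmxDr mulmx1 {1}hK mulmxDl !mulmxA.
by rewrite addrK.
Qed.

End Wood.

Section Main.
Variables (R : realType) (d L m : nat) (a mu0 : R).

Local Notation F := (fine d L m).
Local Notation co j := (coarse d L m j).
Local Notation Lr := (Lr R L).
Local Notation aj := (a_ R L a).
Local Notation muj := (mu_ R L mu0).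

Definition Lap : 'M[R]_#|{: F}| := mx_of (neumann_lap (R := R) (d := d) (N := L ^ m) 1).
Definition Sm j : 'M[R]_(#|{: F}|, #|{: co j}|) := mx_of (Qs_ R d L m j).
Definition Qm j : 'M[R]_(#|{: co j}|, #|{: F}|) := mx_of (Q_ R d L m j).
Definition S1 j : 'M[R]_(#|{: co j}|, #|{: co j.+1}|) := mx_of (Q1s_ R d L m j).
Definition Q1m j : 'M[R]_(#|{: co j.+1}|, #|{: co j}|) := mx_of (Q1_ R d L m j).

Lemma lapE eps (f : F -> R) x : neumann_lap eps f x = eps ^- 2 * app Lap f x.
Proof.
rewrite -(app_lin (lin_of_sum (fun c g s => lap_sum 1 c g s))).
by rewrite /neumann_lap expr1n invr1 mul1r.
Qed.

Lemma QsE j h x : Qs_ R d L m j h x = app (Sm j) h x.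
Proof. exact: (app_lin (lin_of_sum (fun c g s => avg_adj_sum _ c g s))). Qed.
Lemma QE j h x : Q_ R d L m j h x = app (Qm j) h x.
Proof. exact: (app_lin (lin_of_sum (fun c g s => avg_sum _ c g s))). Qed.
Lemma Q1sE j h x : Q1s_ R d L m j h x = app (S1 j) h x.
Proof. exact: (app_lin (lin_of_sum (fun c g s => avg_adj_sum _ c g s))). Qed.
Lemma Q1E j h x : Q1_ R d L m j h x = app (Q1m j) h x.
Proof. exact: (app_lin (lin_of_sum (fun c g s => avg_sum _ c g s))). Qed.

Definition Mm j : 'M[R]_#|{: F}| :=
  - ((Lr ^- j) ^- 2) *: Lap + muj j *: 1%:M + aj j *: (Sm j *m Qm j).
Definition Gm j := invmx (Mm j).

Lemma MmE j g y : app (Mm j) g y =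
  - neumann_lap (Lr ^- j) g y + muj j * g y + aj j * Qs_ R d L m j (Q_ R d L m j g) y.
Proof.
symmetry; rewrite !app_add !app_scale app_id lapE -app_mul mulNr.
by rewrite QsE (app_congr _ _ (fun t => QE g t)).
Qed.

Lemma GE j f x : G_ R d L m a mu0 j f x = app (Gm j) f x.
Proof. by rewrite /G_ /op_inv (mx_of_ext (M := Mm j)) // => g y; rewrite MmE. Qed.

Definition Hm j := aj j *: (Gm j *m Sm j).
Lemma HE j h x : H_ R d L m a mu0 j h x = app (Hm j) h x.
Proof.
by rewrite /H_ GE app_scale -app_mul (app_congr _ _ (fun t => QsE h t)).
Qed.

Definition Hsm j := ((Lr ^- j) ^+ d / 1) *: (Hm j)^T.
Lemma HsE j f y : Hs_ R d L m a mu0 j f y = app (Hsm j) f y.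
Proof.
rewrite /Hs_ /adjoint (mx_of_ext (M := Hm j)) //.
by move=> h x; rewrite HE.
Qed.

Definition Cmat j : 'M[R]_#|{: co j}| :=
  aj j *: 1%:M - aj j ^+ 2 *: (Qm j *m Gm j *m Sm j) + (a * Lr ^- 2) *: (S1 j *m Q1m j).
Lemma CE j h y : C_ R d L m a mu0 j h y = app (invmx (Cmat j)) h y.
Proof.
rewrite /C_ /op_inv (mx_of_ext (M := Cmat j)) // => g z.
rewrite !app_add app_opp !app_scale app_id -!app_mul.
rewrite Q1sE (app_congr _ _ (fun t => Q1E g t)) QE.
rewrite (app_congr _ _ (fun t => GE j _ t)).
by rewrite (app_congr _ _ (fun t => app_congr _ _ (fun u => QsE g u))).
Qed.

Definition Cpm j := Hm j *m invmx (Cmat j) *m Hsm j.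
Lemma CpE j f x : Cp_ R d L m a mu0 j f x = app (Cpm j) f x.
Proof.
rewrite /Cp_ HE (app_congr _ _ (fun t => CE _ t)).
rewrite (app_congr _ _ (fun t => app_congr _ _ (fun u => HsE f u))).
by rewrite !app_mul.
Qed.



Hypothesis L1 : (1 < L)%N.

Lemma L0 : (0 < L)%N. Proof. exact: ltnW. Qed.
Lemma Lj0 j : (0 < L ^ j)%N. Proof. by rewrite expn_gt0 L0. Qed.
Lemma NbM j : (j <= m)%N -> (L ^ m = L ^ j * L ^ (m - j))%N.
Proof. by move=> hj; rewrite -expnD subnKC. Qed.
Lemma NbM1 j : (j < m)%N -> (L ^ (m - j) = L * L ^ (m - j.+1))%N.
Proof. by move=> hj; rewrite -expnS; have -> : (m - j = (m - j.+1).+1)%N by lia. Qed.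

Lemma QS j : (j <= m)%N -> Qm j *m Sm j = 1%:M.
Proof.
move=> hj; apply: app_inj => h y; rewrite -app_mul app_id -QE.
have -> : app (Sm j) h = Qs_ R d L m j h.
  by apply: functional_extensionality => t; rewrite QsE.
exact: (avg_avg_adj (Lj0 j) (NbM hj)).
Qed.

Lemma Q1S j : (j < m)%N -> Q1m j *m S1 j = 1%:M.
Proof.
move=> hj; apply: app_inj => h y; rewrite -app_mul app_id -Q1E.
have -> : app (S1 j) h = Q1s_ R d L m j h.
  by apply: functional_extensionality => t; rewrite Q1sE.
exact: (avg_avg_adj L0 (NbM1 hj)).
Qed.

Lemma Qtr j : Qm j = ((L ^ j)%:R ^- d) *: (Sm j)^T.
Proof. exact: avg_tr. Qed.
Lemma Q1tr j : Q1m j = (L%:R ^- d) *: (S1 j)^T.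
Proof. exact: avg_tr. Qed.

Lemma Qcomp j : (j < m)%N -> Qm j.+1 = Q1m j *m Qm j.
Proof.
move=> hj; apply: app_inj => f z; rewrite -app_mul -QE -Q1E.
have -> : app (Qm j) f = Q_ R d L m j f.
  by apply: functional_extensionality => t; rewrite QE.
rewrite /Q1_ /Q_ (avg_comp L (Lj0 j) (NbM (ltnW hj))).
by rewrite expnSr.
Qed.

Lemma natLj_neq0 j : ((L ^ j)%:R : R) != 0.
Proof. by rewrite pnatr_eq0 -lt0n Lj0. Qed.

Lemma Scomp j : (j < m)%N -> Sm j.+1 = Sm j *m S1 j.
Proof.
move=> hj; apply: trmx_inj; apply/(scalerI (a := ((L ^ j.+1)%:R ^- d))).
  by rewrite invr_eq0 expf_neq0 // natLj_neq0.
rewrite -Qtr Qcomp // Qtr Q1tr trmx_mul -scalemxAl -scalemxAr scalerA.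
by rewrite expnSr natrM exprMn invfM mulrC.
Qed.

Lemma Lap_sym : Lap^T = Lap.
Proof.
apply/matrixP => i l; rewrite !mxE.
have E : forall (w : F -> R) t, \sum_x (if x == t then 1 else 0) * w x = w t.
  move=> w t; rewrite (bigD1 t) //= eqxx mul1r big1 ?addr0 //.
  by move=> x /negbTE ->; rewrite mul0r.
rewrite -[LHS]E -[RHS]E !lap_form; congr (- _); apply: eq_bigr => mu _.
by apply: eq_bigr => x _; rewrite mulrC.
Qed.

Lemma SQ_sym j : (Sm j *m Qm j)^T = Sm j *m Qm j.
Proof. by rewrite trmx_mul Qtr linearZ /= trmxK -scalemxAl -scalemxAr. Qed.

Lemma Mm_sym j : (Mm j)^T = Mm j.
Proof. by rewrite /Mm !linearD /= !linearZ /= Lap_sym SQ_sym trmx1. Qed.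

Lemma Gm_sym j : (Gm j)^T = Gm j.
Proof. by rewrite /Gm trmx_inv Mm_sym. Qed.


Hypothesis ha : 0 < a.
Hypothesis hmu : 0 <= mu0.

Lemma Lr_gt1 : 1 < Lr. Proof. by rewrite /Defs.Lr ltr1n. Qed.
Lemma Lr_gt0 : 0 < Lr. Proof. exact: lt_trans ltr01 Lr_gt1. Qed.
Lemma Lr_neq0 : Lr != 0. Proof. by rewrite gt_eqF // Lr_gt0. Qed.

Lemma one_sub_pos n : (0 < n)%N -> 0 < 1 - Lr ^- n.
Proof.
move=> n0; rewrite subr_gt0 invf_lt1 ?exprn_gt0 ?Lr_gt0 //.
by rewrite exprn_egt1 ?Lr_gt1 // -lt0n.
Qed.

Lemma aj_pos j : (0 < j)%N -> 0 < aj j.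
Proof.
move=> j0; rewrite /a_ divr_gt0 // ?mulr_gt0 // one_sub_pos //.
by rewrite muln_gt0.
Qed.

Lemma muj_ge0 j : 0 <= muj j.
Proof. by rewrite /mu_ mulr_ge0 // exprn_ge0 // ltW // Lr_gt0. Qed.

Lemma lap_scale eps (f : F -> R) x : neumann_lap eps f x = eps ^- 2 * neumann_lap 1 f x.
Proof. by rewrite /neumann_lap expr1n invr1 mul1r. Qed.

Lemma Mm_unit j : (0 < j)%N -> (j <= m)%N -> Mm j \in unitmx.
Proof.
move=> j0 hj; apply: unit_of_ker => v Hv.
set f := fun t : F => v 0 (enum_rank t).
have Hf : forall s, app (Mm j) f s = 0.
  move=> s; have H0 : Mm j *m v^T = 0 by rewrite -Mm_sym -trmx_mul Hv trmx0.
  rewrite /app (_ : \col_k f (enum_val k) = v^T) ?H0 ?mxE //.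
  by apply/colP => k; rewrite !mxE /f enum_valK.
have Hsum : \sum_s f s * app (Mm j) f s = 0.
  by rewrite big1 // => s _; rewrite Hf mulr0.
set eps := Lr ^- j.
set E := \sum_mu \sum_(x : F | ((x mu).+1 < L ^ m)%N)
          (f (up mu x) - f x) * (f (up mu x) - f x).
set S2 := \sum_s f s ^+ 2.
set S3 := \sum_(y : co j) Q_ R d L m j f y ^+ 2.
have h1 : \sum_s f s * (eps ^- 2 * neumann_lap 1 f s) = - (eps ^- 2 * E).
  by rewrite -mulrN -lap_form mulr_sumr; apply: eq_bigr => s _; rewrite mulrCA.
have h2 : \sum_s f s * (muj j * f s) = muj j * S2.
  by rewrite mulr_sumr; apply: eq_bigr => s _; rewrite mulrCA expr2.
have h3 : \sum_s f s * (aj j * Qs_ R d L m j (Q_ R d L m j f) s) =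
          aj j * ((L ^ j)%:R ^+ d * S3).
  rewrite -(avg_adj_form _ (Lj0 j)) mulr_sumr.
  by apply: eq_bigr => s _; rewrite mulrCA.
move: Hsum; under eq_bigr => s _ do rewrite MmE lap_scale !mulrDr mulrN.
rewrite !big_split /= sumrN h1 h2 h3 opprK => Hs.
have E0 : 0 <= E.
  by apply: sumr_ge0 => mu _; apply: sumr_ge0 => x _; rewrite -expr2 sqr_ge0.
have S20 : 0 <= S2 by apply: sumr_ge0 => s _; rewrite sqr_ge0.
have S30 : 0 <= S3 by apply: sumr_ge0 => s _; rewrite sqr_ge0.
have e0 : 0 < eps ^- 2 by rewrite invr_gt0 exprn_gt0 // invr_gt0 exprn_gt0 // Lr_gt0.
have b0 : 0 < (L ^ j)%:R ^+ d :> R by rewrite exprn_gt0 // ltr0n Lj0.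
have X1 : 0 <= eps ^- 2 * E by rewrite mulr_ge0 // ltW.
have X2 : 0 <= muj j * S2 by rewrite mulr_ge0 // muj_ge0.
have X3 : 0 <= aj j * ((L ^ j)%:R ^+ d * S3).
  by apply: mulr_ge0; [exact: ltW (aj_pos j0) | exact: mulr_ge0 (ltW b0) S30].
have {X2 Hs} [Y1 Y3] : eps ^- 2 * E = 0 /\ aj j * ((L ^ j)%:R ^+ d * S3) = 0.
  move: X1 X2 X3 Hs; set x1 := eps ^- 2 * E; set x2 := muj j * S2.
  set x3 := aj j * _; move=> *; split; lra.
move: Y1 => /eqP; rewrite mulf_eq0 (gt_eqF e0) /= => /eqP EE.
move: Y3 => /eqP; rewrite mulf_eq0 (gt_eqF (aj_pos j0)) mulf_eq0 (gt_eqF b0) /= => /eqP SS.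
have edges : forall mu (x : F), ((x mu).+1 < L ^ m)%N -> f (up mu x) = f x.
  move=> mu x Hx; apply/eqP; rewrite -subr_eq0 -sqrf_eq0 expr2; apply/eqP.
  have pos : forall (mu : 'I_d) (x : F), 0 <= (f (up mu x) - f x) * (f (up mu x) - f x).
    by move=> ? ?; rewrite -expr2 sqr_ge0.
  have inner := psumr_eq0P (fun mu _ => sumr_ge0 _ (fun x _ => pos mu x)) EE (i := mu) isT.
  exact: psumr_eq0P (fun x _ => pos mu x) inner x Hx.
have cst := const_of_edges edges.
have Q0 : forall y, Q_ R d L m j f y = 0.
  move=> y; apply/eqP; rewrite -sqrf_eq0; apply/eqP.
  by apply: (psumr_eq0P (fun y _ => sqr_ge0 _) SS).
have f0 : forall x, f x = 0.
  move=> x; rewrite -(Q0 (blk (Lj0 j) (NbM hj) x)) /Q_.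
  by rewrite (@avg_const_on _ _ _ _ (Lj0 j) (NbM hj) _ _ _ (f x)) // => x' _; apply: cst.
apply/rowP => k; rewrite mxE; move: (f0 (enum_val k)); rewrite /f enum_valK.
by rewrite (_ : 0 = ord0) // ; apply: val_inj; case: (0 : 'I_1).
Qed.


Lemma Lrinv_pow n : (Lr ^- n) ^+ d = ((L ^ n)%:R ^- d : R).
Proof. by rewrite natrX exprVn. Qed.

Lemma Hsm_eq j : Hsm j = aj j *: (Qm j *m Gm j).
Proof.
rewrite /Hsm /Hm linearZ /= trmx_mul Gm_sym divr1 scalerA mulrC -scalerA.
by rewrite Lrinv_pow Qtr -scalemxAl.
Qed.

Lemma sc1 j : Lr ^- 2 * (Lr ^- j.+1) ^- 2 = (Lr ^- j) ^- 2.
Proof.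
rewrite [Lr ^+ j.+1]exprS.
have h := Lr_neq0; have hj : Lr ^+ j != 0 by rewrite expf_neq0.
move: hj; set t := Lr ^+ j => hj.
by field; rewrite ?h ?hj.
Qed.

Lemma sc2 j : Lr ^- 2 * muj j.+1 = muj j.
Proof.
by rewrite /mu_ mulnS exprD mulrA mulKf // expf_neq0 // Lr_neq0.
Qed.

Lemma sc3 j : (0 < j)%N ->
  (a * Lr ^- 2) * aj j = (aj j.+1 * Lr ^- 2) * (aj j + a * Lr ^- 2).
Proof.
move=> j0; rewrite /a_.
have h1 : 0 < 1 - Lr ^- (2 * j) by apply: one_sub_pos; rewrite muln_gt0 j0.
have h2 : 0 < 1 - Lr ^- (2 * j.+1) by apply: one_sub_pos; rewrite muln_gt0.
move: h2; rewrite mulnS exprD invfM.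
set u := Lr ^- 2; set t := Lr ^- (2 * j).
have hu : u != 0 by rewrite invr_eq0 expf_neq0 // Lr_neq0.
move=> h2; have n1 : 1 - t != 0 by rewrite gt_eqF.
have n2 : 1 - u * t != 0 by rewrite gt_eqF.
by field; rewrite n1 n2.
Qed.


Lemma key j : (0 < j)%N -> (j < m)%N -> Gm j.+1 = Lr ^- 2 *: (Gm j + Cpm j).
Proof.
move=> j0 hj.
have uM := Mm_unit j0 (ltnW hj).
have uM1 := Mm_unit (ltn0Sn j) hj.
have l2 : Lr ^- 2 != 0 by rewrite invr_eq0 expf_neq0 // Lr_neq0.
set M' := Lr ^- 2 *: Mm j.+1.
have uM' : M' \in unitmx.
  have H : M' *m ((Lr ^- 2)^-1 *: Gm j.+1) = 1%:M.
    by rewrite -scalemxAl -scalemxAr scalerA mulfV // scale1r mulmxV.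
  exact: (mulmx1_unit H).1.
set b := aj j.+1 * Lr ^- 2.
set P := S1 j *m Q1m j.
set X := aj j *: 1%:M - b *: P.
have hX : X = aj j *: 1%:M - b *: P by [].
have EM : Mm j = M' + Sm j *m X *m Qm j.
  have eX : Sm j *m X *m Qm j = aj j *: (Sm j *m Qm j) - b *: (Sm j *m P *m Qm j).
    by rewrite hX mulmxBr mulmxBl -!scalemxAr -!scalemxAl mulmx1.
  rewrite eX /M' /Mm Scomp // Qcomp // !scalerDr !scalerA mulrN sc1 sc2.
  rewrite [Lr ^- 2 * aj j.+1]mulrC -/b /P !mulmxA.
  by rewrite -!addrA; congr (_ + (_ + _)); rewrite addrC subrK.
clearbody X.
have hP : P *m P = P by rewrite /P mulmxA -[S1 j *m Q1m j *m S1 j]mulmxA Q1S // mulmx1.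
set K := Qm j *m Gm j *m Sm j.
set K' := Qm j *m invmx M' *m Sm j.
have hK : K' = K + K *m X *m K'.
  have e := wood_s1 uM uM' EM.
  by rewrite {1}/K' {1}e /K /K' /Gm !mulmxDr mulmxDl !mulmxA.
have CI := cinv hX hP (sc3 j0) hK.
have ajn : aj j != 0 by rewrite gt_eqF // aj_pos.
have CI' : Cmat j *m ((aj j ^+ 2)^-1 *: (X + X *m K' *m X)) = 1%:M.
  by rewrite -scalemxAr CI scalerA mulVf ?scale1r // expf_neq0.
have Cinv : invmx (Cmat j) = (aj j ^+ 2)^-1 *: (X + X *m K' *m X).
  by rewrite -[RHS](mulKmx (mulmx1_unit CI').1) CI' mulmx1.
have W := woodbury uM uM' EM.
have CpE' : Cpm j = Gm j *m Sm j *m (X + X *m K' *m X) *m Qm j *m Gm j.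
  rewrite /Cpm Hsm_eq Cinv /Hm -!scalemxAl -!scalemxAr !scalerA.
  rewrite -scalemxAl scalerA (_ : aj j * aj j * aj j ^- 2 = 1) ?scale1r ?mulmxA //.
  by rewrite -expr2 mulfV // expf_neq0.
apply: (scalerI (a := (Lr ^- 2)^-1)); first by rewrite invr_eq0.
rewrite scalerA mulVf // scale1r -invmxZ // -/M' W CpE'.
by rewrite /Gm !mulmxA.
Qed.


Lemma key_fun j f x : (0 < j)%N -> (j < m)%N ->
  G_ R d L m a mu0 j.+1 f x = Lr ^- 2 * (G_ R d L m a mu0 j f x + Cp_ R d L m a mu0 j f x).
Proof. by move=> j0 hj; rewrite !GE CpE key // app_scale app_add. Qed.

Lemma pow_inv_S n : (Lr ^+ n.+1) ^- 2 = Lr ^- 2 * (Lr ^+ n) ^- 2.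
Proof. by rewrite [Lr ^+ n.+1]exprS exprMn invfM. Qed.

Lemma main_ind k : (1 <= k)%N -> (k <= m)%N -> forall f x,
    G_ R d L m a mu0 k f x =
      \sum_(1 <= j < k)
         (Lr ^+ (k - j)) ^- 2 * Cp_ R d L m a mu0 j (dilate f) x
    + (Lr ^+ (k - 1)) ^- 2 * G_ R d L m a mu0 1 (dilate f) x.
Proof.
elim: k => [//|k IH] k1 km f x.
have df : dilate f = f by [].
rewrite df; case: (posnP k) => [->|k0].
  by rewrite big_geq // add0r subnn expr0 expr1n invr1 mul1r.
rewrite key_fun // (IH k0 (ltnW km)) df big_nat_recr //= subSnn expr1.
rewrite mulrDr mulrDr mulr_sumr -addrA [_ + Lr ^- 2 * _]addrC addrA.
congr (_ + _ + _).
- apply: eq_big_nat => j /andP [_ hjk]; by rewrite mulrA -pow_inv_S subSn // ltnW.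
- rewrite !subn1 /= -[in RHS](prednK k0) pow_inv_S mulrA //.
Qed.

End Main.

Unset Implicit Arguments.

Theorem mainTheorem9 (R : realType) (d L k m : nat) (a mu0 : R) :
  (1 <= d)%N -> odd L -> (1 < L)%N -> (1 <= k)%N -> (k <= m)%N ->
  0 < a -> a <= 1 -> 0 <= mu0 ->
  forall (f : fine d L m -> R) (x : fine d L m),
    G_ R d L m a mu0 k f x =
      \sum_(1 <= j < k)
         (Lr R L ^+ (k - j)) ^- 2 * Cp_ R d L m a mu0 j (dilate f) x
    + (Lr R L ^+ (k - 1)) ^- 2 * G_ R d L m a mu0 1 (dilate f) x.
Proof.
move=> _ _ L1 k1 km ha _ hmu f x.
exact: main_ind.
Qed.
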